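(* The worst-case time complexity of the algorithm Classifier on an input configuration $G$ with $n$ nodes is $O(n^3\Delta)$, where $\Delta$ is the maximum degree of $G$.
   Context: A configuration is a finite simple undirected connected graph $G$ with $n$ nodes, each node $v$ having a non-negative integer wakeup tag $t_v$; the span $\sigma$ is the largest tag (the smallest tag being $0$). Algorithm Classifier (centralized, input $G$). It maintains a partition of the nodes into classes, with $\mathrm{class}(v)\in\{1,\ldots,\mathit{numClasses}\}$. Initially all nodes are in class $1$ and $\mathit{numClasses}=1$. One iteration does: for each node $v$, build a list $N_v$ of triples by scanning the neighbours $w$ of $v$: if $\mathrm{class}(w)\ne\mathrm{class}(v)$ or $t_w\ne t_v$, then if a triple with first two coordinates $(\mathrm{class}(w),\sigma+1+t_w-t_v)$ is already in $N_v$ its third coordinate is set to $*$, otherwise $(\mathrm{class}(w),\sigma+1+t_w-t_v,1)$ is appended; $N_v$ is sorted lexicographically (with $1$ before $*$) and concatenated into the label $L_v$. Then the partition is refined by comparing each node in turn with one representative of each existing class: two nodes end up in the same class iff they were in the same class before the iteration and have equal labels; nodes matching no representative start a new class (incrementing $\mathit{numClasses}$). Main loop: for $i=1,\ldots,\lceil n/2\rceil$: let $\mathit{old}=\mathit{numClasses}$; perform one iteration; if some class contains exactly one node, output ''Yes'' and stop; otherwise, if $\mathit{numClasses}=\mathit{old}$, output ''No'' and stop. *)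

(* Defs.v *)
(* A cost-instrumented model of Algorithm Classifier:
   every function returns its result together with the number of
   elementary steps (unit-cost RAM model) it performs. *)
From mathcomp Require Import all_boot.

Set Implicit Arguments.
Unset Strict Implicit.
Unset Printing Implicit Defensive.

(* A triple (class, offset, star): star = false encodes the third
   coordinate 1, star = true encodes '*'. *)
Definition triple := (nat * nat * bool)%type.

Definition triple_le (x y : triple) : bool :=
  (x.1.1 < y.1.1) ||
  ((x.1.1 == y.1.1) && ((x.1.2 < y.1.2) || ((x.1.2 == y.1.2) && (x.2 <= y.2)))).

Fixpoint ins_triple (c d : nat) (l : seq triple) : seq triple * nat :=
  match l with
  | [::] => ([:: (c, d, false)], 1)
  | x :: l' =>
      if (x.1.1 == c) && (x.1.2 == d) then ((c, d, true) :: l', 1)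
      else let: (l'', k) := ins_triple c d l' in (x :: l'', k.+1)
  end.

Fixpoint insert_sorted (x : triple) (l : seq triple) : seq triple * nat :=
  match l with
  | [::] => ([:: x], 1)
  | y :: l' =>
      if triple_le x y then (x :: l, 1)
      else let: (l'', k) := insert_sorted x l' in (y :: l'', k.+1)
  end.

Fixpoint isort (l : seq triple) : seq triple * nat :=
  match l with
  | [::] => ([::], 1)
  | x :: l' =>
      let: (s, k) := isort l' in
      let: (s', k') := insert_sorted x s in (s', k + k')
  end.

Fixpoint label_eq (l1 l2 : seq triple) : bool * nat :=
  match l1, l2 with
  | [::], [::] => (true, 1)
  | x :: l1', y :: l2' =>
      if x == y then let: (b, k) := label_eq l1' l2' in (b, k.+1)
      else (false, 1)
  | _, _ => (false, 1)
  end.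

Section Classifier.

Variables (n : nat) (e : rel 'I_n) (t : 'I_n -> nat).

Definition neighbors (v : 'I_n) : seq 'I_n := [seq w <- ord_enum n | e v w].

Definition max_degree : nat := foldr maxn 0 [seq size (neighbors v) | v <- ord_enum n].

Definition span : nat := foldr maxn 0 [seq t v | v <- ord_enum n].

Definition is_configuration : Prop :=
  symmetric e /\ irreflexive e /\ (forall x y : 'I_n, connect e x y) /\
  exists v : 'I_n, t v = 0.

Definition build_N (cls : 'I_n -> nat) (v : 'I_n) : seq triple * nat :=
  foldl (fun (acc : seq triple * nat) (w : 'I_n) =>
           let: (l, k) := acc in
           if (cls w != cls v) || (t w != t v) then
             let: (l', k') := ins_triple (cls w) (span + 1 + t w - t v) l in
             (l', k + k' + 1)
           else (l, k + 1))
        ([::], 1) (neighbors v).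

Definition label (cls : 'I_n -> nat) (v : 'I_n) : seq triple * nat :=
  let: (l, k) := build_N cls v in
  let: (s, k') := isort l in (s, k + k').

(* Compare v with the representatives reps (the j-th representative,
   0-based, stands for new class j+1); returns the index of the first
   matching representative. *)
Fixpoint find_rep (oldcls : 'I_n -> nat) (lab : 'I_n -> seq triple)
    (v : 'I_n) (reps : seq 'I_n) (j : nat) : option nat * nat :=
  match reps with
  | [::] => (None, 1)
  | r :: rs =>
      let: (b, k) := label_eq (lab v) (lab r) in
      if (oldcls v == oldcls r) && b then (Some j, k.+1)
      else let: (o, k') := find_rep oldcls lab v rs j.+1 in (o, k + k'.+1)
  end.

Definition upd (f : 'I_n -> nat) (v : 'I_n) (c : nat) : 'I_n -> nat :=
  fun w => if w == v then c else f w.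

Definition refine (oldcls : 'I_n -> nat) (lab : 'I_n -> seq triple)
    : seq 'I_n * ('I_n -> nat) * nat :=
  foldl (fun (st : seq 'I_n * ('I_n -> nat) * nat) (v : 'I_n) =>
           let: (reps, ncls, k) := st in
           let: (o, k') := find_rep oldcls lab v reps 0 in
           match o with
           | Some j => (reps, upd ncls v j.+1, k + k' + 1)
           | None => (rcons reps v, upd ncls v (size reps).+1, k + k' + 1)
           end)
        ([::], (fun _ => 0), 1) (ord_enum n).

Definition iteration (cls : 'I_n -> nat) : ('I_n -> nat) * nat * nat :=
  let lab := fun v => (label cls v).1 in
  let klab := sumn [seq (label cls v).2 | v <- ord_enum n] in
  let: (reps, ncls, k) := refine cls lab in
  (ncls, size reps, klab + k).

Definition has_singleton (cls : 'I_n -> nat) (numC : nat) : bool * nat :=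
  (has (fun c => count (fun v => cls v == c) (ord_enum n) == 1) (iota 1 numC),
   numC * n + 1).

(* Main loop, with fuel = number of remaining loop indices.
   Output: Some true = "Yes", Some false = "No", None = loop exhausted. *)
Fixpoint main_loop (fuel : nat) (cls : 'I_n -> nat) (numC : nat)
    : option bool * nat :=
  match fuel with
  | 0 => (None, 1)
  | fuel'.+1 =>
      let: (cls', numC', k) := iteration cls in
      let: (b, k2) := has_singleton cls' numC' in
      if b then (Some true, k + k2 + 1)
      else if numC' == numC then (Some false, k + k2 + 1)
      else let: (o, k3) := main_loop fuel' cls' numC' in (o, k + k2 + k3 + 1)
  end.

(* The whole algorithm: initialisation (all nodes in class 1, computing the
   span costs n steps), then loop for i = 1 .. ceil(n/2). *)
Definition classifier : option bool * nat :=
  let: (o, k) := main_loop (uphalf n) (fun _ => 1) 1 in (o, k + n + 1).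

Definition classifier_cost : nat := classifier.2.

End Classifier.

(* Main.v *)
Require Import Defs.
From mathcomp Require Import all_boot zify.
Set Implicit Arguments.
Unset Strict Implicit.

Lemma ins_bound c d l : size (ins_triple c d l).1 <= size l + 1 /\ (ins_triple c d l).2 <= size l + 1.
Proof.
elim: l => [|x l IH] //=.
case: ifP => _ /=; first lia.
case E: (ins_triple c d l) => [l'' k] /=; rewrite E /= in IH; lia.
Qed.

Lemma insert_bound x l : size (insert_sorted x l).1 = size l + 1 /\ (insert_sorted x l).2 <= size l + 1.
Proof.
elim: l => [|y l IH] //=.
case: ifP => _ /=; first lia.
case E: (insert_sorted x l) => [l'' k] /=; rewrite E /= in IH; lia.
Qed.

Lemma isort_bound l : size (isort l).1 = size l /\ (isort l).2 <= 1 + size l * (size l + 1).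
Proof.
elim: l => [|x l IH] //=.
case E: (isort l) => [s k] /=; rewrite E /= in IH.
case E2: (insert_sorted x s) => [s' k'] /=.
have := insert_bound x s; rewrite E2 /=; nia.
Qed.

Lemma label_eq_bound l1 l2 : (label_eq l1 l2).2 <= size l1 + 1.
Proof.
elim: l1 l2 => [|x l1 IH] [|y l2] //=.
case: ifP => _ //=.
case E: (label_eq l1 l2) => [b k] /=; have := IH l2; rewrite E /=; lia.
Qed.

Lemma foldl_bound (A : Type) (f : seq triple * nat -> A -> seq triple * nat) :
  (forall acc w, size (f acc w).1 <= size acc.1 + 1 /\ (f acc w).2 <= acc.2 + size acc.1 + 2) ->
  forall s acc, size (foldl f acc s).1 <= size acc.1 + size s /\
     (foldl f acc s).2 <= acc.2 + size s * (size acc.1 + size s + 2).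
Proof.
move=> H; elim=> [|x s IH] acc /=; first lia.
have := IH (f acc x); have := H acc x; nia.
Qed.

Lemma foldl_bound2 (A B : Type) (S : nat) (f : seq A * B * nat -> A -> seq A * B * nat) :
  (forall st w, size (f st w).1.1 <= size st.1.1 + 1 /\ (f st w).2 <= st.2 + size st.1.1 * (S + 2) + 2) ->
  forall s st, size (foldl f st s).1.1 <= size st.1.1 + size s /\
     (foldl f st s).2 <= st.2 + size s * ((size st.1.1 + size s) * (S + 2) + 2).
Proof.
move=> H; elim=> [|x s IH] st /=; first lia.
have := IH (f st x); have := H st x; nia.
Qed.

Lemma foldr_max_ge (T : eqType) (g : T -> nat) s x : x \in s -> g x <= foldr maxn 0 [seq g y | y <- s].
Proof.
elim: s => [|y s IH] //=; rewrite inE => /orP [/eqP ->|/IH]; first exact: leq_maxl.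
move=> h; apply: leq_trans h (leq_maxr _ _).
Qed.

Lemma foldr_max_le (T : Type) (g : T -> nat) s m : (forall x, g x <= m) -> foldr maxn 0 [seq g y | y <- s] <= m.
Proof.
move=> H; elim: s => [|y s IH] //=; by rewrite geq_max H IH.
Qed.

Lemma size_ord_enum n : size (ord_enum n) = n.
Proof. by rewrite -(size_map val) val_ord_enum size_iota. Qed.

Section S.
Variables (n : nat) (e : rel 'I_n) (t : 'I_n -> nat).
Local Notation D := (max_degree e).

Lemma deg_le v : size (neighbors e v) <= D.
Proof. exact: (foldr_max_ge (fun v => size (neighbors e v)) (mem_ord_enum v)). Qed.

Lemma D_le : D <= n.
Proof.
apply: foldr_max_le => v; rewrite /neighbors size_filter.
by apply: leq_trans (count_size _ _) _; rewrite size_ord_enum.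
Qed.

Lemma build_bound cls v : size (build_N e t cls v).1 <= D /\ (build_N e t cls v).2 <= 1 + D * (D + 2).
Proof.
pose F := (fun (acc : seq triple * nat) (w : 'I_n) =>
           let: (l, k) := acc in
           if (cls w != cls v) || (t w != t v) then
             let: (l', k') := ins_triple (cls w) (span t + 1 + t w - t v) l in
             (l', k + k' + 1)
           else (l, k + 1)).
have -> : build_N e t cls v = foldl F ([::], 1) (neighbors e v) by [].
have step : forall acc w, size (F acc w).1 <= size acc.1 + 1 /\ (F acc w).2 <= acc.2 + size acc.1 + 2.
  move=> [l k] w; rewrite /F /=; case: ifP => _ /=; last lia.
  case E: (ins_triple _ _ _) => [l' k'] /=.
  have := ins_bound (cls w) (span t + 1 + t w - t v) l; rewrite E /=; lia.
have := foldl_bound step (neighbors e v) ([::], 1); have := deg_le v; simpl; nia.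
Qed.

Lemma label_bound cls v : size (label e t cls v).1 <= D /\ (label e t cls v).2 <= 2 + D * (2 * D + 3).
Proof.
rewrite /label; have := build_bound cls v.
case: (build_N e t cls v) => l k /=.
case E: (isort l) => [s k'] /=; have := isort_bound l; rewrite E /=; nia.
Qed.

Lemma find_rep_bound (oldcls : 'I_n -> nat) (lab : 'I_n -> seq triple) (v : 'I_n) (reps : seq 'I_n) j S : size (lab v) <= S ->
  (find_rep oldcls lab v reps j).2 <= size reps * (S + 2) + 1.
Proof.
move=> HS; elim: reps j => [|r rs IH] j //=.
have := label_eq_bound (lab v) (lab r).
case: (label_eq (lab v) (lab r)) => b k /=.
case: ifP => _ /=; first nia.
case E: (find_rep oldcls lab v rs j.+1) => [o k'] /=; have := IH j.+1; rewrite E /=; nia.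
Qed.

Lemma refine_bound (oldcls : 'I_n -> nat) (lab : 'I_n -> seq triple) S : (forall v, size (lab v) <= S) ->
  size (refine oldcls lab).1.1 <= n /\ (refine oldcls lab).2 <= 1 + n * (n * (S + 2) + 2).
Proof.
move=> HS.
pose F := (fun (st : seq 'I_n * ('I_n -> nat) * nat) (v : 'I_n) =>
           let: (reps, ncls, k) := st in
           let: (o, k') := find_rep oldcls lab v reps 0 in
           match o with
           | Some j => (reps, upd ncls v j.+1, k + k' + 1)
           | None => (rcons reps v, upd ncls v (size reps).+1, k + k' + 1)
           end).
have -> : refine oldcls lab = foldl F ([::], (fun _ => 0), 1) (ord_enum n) by [].
have step : forall st w, size (F st w).1.1 <= size st.1.1 + 1 /\ (F st w).2 <= st.2 + size st.1.1 * (S + 2) + 2.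
  move=> [[reps ncls] k] w; rewrite /F /=.
  have := find_rep_bound oldcls reps 0 (HS w).
  case: (find_rep oldcls lab w reps 0) => [[j|] k'] /=; rewrite ?size_rcons; lia.
have := foldl_bound2 step (ord_enum n) ([::], (fun _ => 0), 1); rewrite size_ord_enum /=; nia.
Qed.

Definition IB := n * (2 + D * (2 * D + 3)) + (1 + n * (n * (D + 2) + 2)).

Lemma iteration_bound cls : (iteration e t cls).1.2 <= n /\ (iteration e t cls).2 <= IB.
Proof.
rewrite /iteration.
have H1 : sumn [seq (label e t cls v).2 | v <- ord_enum n] <= n * (2 + D * (2 * D + 3)).
  have : forall s : seq 'I_n, sumn [seq (label e t cls v).2 | v <- s] <= size s * (2 + D * (2 * D + 3)).
    elim=> [|x s IH] //=; have := label_bound cls x; nia.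
  by move=> /(_ (ord_enum n)); rewrite size_ord_enum.
have := @refine_bound cls (fun v => (label e t cls v).1) D (fun v => (label_bound cls v).1).
case: (refine cls _) => [[reps ncls] k] /=; rewrite /IB; lia.
Qed.

Lemma main_bound fuel cls numC : (main_loop e t fuel cls numC).2 <= 1 + fuel * (IB + n * n + 2).
Proof.
elim: fuel cls numC => [|f IH] cls numC //=.
have := iteration_bound cls.
case: (iteration e t cls) => [[cls' numC'] k] /= [Hn Hk].
have Hs : (has_singleton cls' numC').2 <= n * n + 1 by rewrite /=; nia.
case: (has_singleton cls' numC') Hs => b k2 /= Hs.
case: ifP => _ /=; first nia.
case: ifP => _ /=; first nia.
have := IH cls' numC'; case: (main_loop e t f cls' numC') => o k3 /=; nia.
Qed.

Lemma classifier_bound : classifier_cost e t <= n * (IB + n * n + 2) + n + 2.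
Proof.
rewrite /classifier_cost /classifier.
have := main_bound (uphalf n) (fun _ => 1) 1.
case: (main_loop e t (uphalf n) (fun _ => 1) 1) => o k /=.
have : uphalf n <= n by rewrite leq_uphalf_double -addnn leq_addr.
nia.
Qed.

End S.

Lemma D_pos n (e : rel 'I_n) (t : 'I_n -> nat) : 2 <= n -> is_configuration e t -> 1 <= max_degree e.
Proof.
case: n e t => [|[|m]] // e t _ [_ [_ [Hc _]]].
have := Hc ord0 (Ordinal (isT : 1 < m.+2)).
case/connectP => [[|z p]] /=; first by move=> _ /(congr1 val).
case/andP => Hz _ _.
apply: leq_trans (deg_le e ord0).
by rewrite /neighbors size_filter -has_count; apply/hasP; exists z => //; rewrite mem_ord_enum.
Qed.

Theorem lemma2 :
  exists c N : nat, forall (n : nat) (e : rel 'I_n) (t : 'I_n -> nat),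
    N <= n -> is_configuration e t ->
    classifier_cost e t <= c * n ^ 3 * max_degree e.
Proof.
exists 20, 2 => n e t Hn Hc.
have H1 := D_pos Hn Hc; have H2 := D_le e.
apply: leq_trans (classifier_bound e t) _; rewrite /IB.
move: (max_degree e) H1 H2 => D H1 H2.
have h1 : D * D <= n * D by rewrite leq_mul2r H2 orbT.
have h2 : n <= n * D by rewrite leq_pmulr.
have h3 : 1 <= n by lia.
nia.
Qed.
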